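(* Let $G$ be a graph and let $\mathcal{A}$ and $\mathcal{B}$ be two distinct min-max clique coverings of $G$ that both satisfy simple intersection. If there are two distinct cliques $A,A'\in\mathcal{A}$ and two distinct cliques $B,B'\in\mathcal{B}$ such that $A\cap A'\cap B\cap B'\neq\emptyset$, then $A\cap A'=B\cap B'$.
   Context: A clique covering of a graph is a set of cliques such that every edge lies in at least one of them; $\operatorname{cc}(G)$ is its minimum size. A min-max clique covering is a clique covering of size $\operatorname{cc}(G)$ consisting of maximal cliques; it has simple intersection if no three distinct cliques of it share a vertex. *)

(* Defs.v *)
(* A (finite simple) graph is a symmetric irreflexive
   relation e on a finite vertex type T. *)
From mathcomp Require Import all_boot.
Set Implicit Arguments. Unset Strict Implicit. Unset Printing Implicit Defensive.

Section Cliques.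
Variables (T : finType) (e : rel T).

Definition is_clique (K : {set T}) : Prop :=
  forall x y, x \in K -> y \in K -> x != y -> e x y.

Definition is_maximal_clique (K : {set T}) : Prop :=
  is_clique K /\ forall K', is_clique K' -> K \subset K' -> K' = K.

Definition is_clique_covering (C : {set {set T}}) : Prop :=
  (forall K, K \in C -> is_clique K) /\
  (forall x y, e x y -> exists2 K, K \in C & (x \in K) && (y \in K)).

Definition is_cc (k : nat) : Prop :=
  (exists2 C, is_clique_covering C & #|C| = k) /\
  (forall C, is_clique_covering C -> k <= #|C|).

Definition is_minmax_clique_covering (C : {set {set T}}) : Prop :=
  is_clique_covering C /\ is_cc #|C| /\
  (forall K, K \in C -> is_maximal_clique K).

Definition simple_intersection (C : {set {set T}}) : Prop :=
  forall K1 K2 K3 x, K1 \in C -> K2 \in C -> K3 \in C ->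
    K1 != K2 -> K1 != K3 -> K2 != K3 ->
    ~ [&& x \in K1, x \in K2 & x \in K3].

End Cliques.

(* Main.v *)
Require Import Defs.
From mathcomp Require Import all_boot.
Set Implicit Arguments. Unset Strict Implicit. Unset Printing Implicit Defensive.

Definition Pu (T : finType) (e : rel T) (x v : T) : Prop :=
  (v = x \/ e x v) /\ forall w, (w = x \/ e x w) -> (w = v \/ e v w).

Lemma key (T : finType) (e : rel T) (e_sym : symmetric e)
  (C : {set {set T}}) :
  is_clique_covering e C -> (forall K, K \in C -> is_maximal_clique e K) ->
  simple_intersection C ->
  forall A A' x, A \in C -> A' \in C -> A != A' -> x \in A -> x \in A' ->
  forall v, (v \in A :&: A') <-> Pu e x v.
Proof.
move=> [hcl hcov] hmax hsi A A' x hA hA' hAA' xA xA' v.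
have inN : forall K w, K \in C -> x \in K -> w \in K -> w = x \/ e x w.
  move=> K w hK xK wK; case: (eqVneq w x) => [->|hne]; first by left.
  by right; apply: (hcl K hK) => //; rewrite eq_sym.
split.
- rewrite inE => /andP [vA vA']; split; first exact: (inN A).
  move=> w [->|hxw].
    case: (eqVneq x v) => [->|hne]; first by left.
    by right; apply: (hcl A hA) => //; rewrite eq_sym.
  have wAA : (w \in A) || (w \in A').
    have [K hK /andP [xK wK]] := hcov _ _ hxw.
    case: (eqVneq K A) => [<-|hKA]; first by rewrite wK.
    case: (eqVneq K A') => [<-|hKA']; first by rewrite wK orbT.
    exfalso; apply: (hsi K A A' x hK hA hA' hKA hKA' hAA').
    by rewrite xK xA xA'.
  case: (eqVneq w v) => [->|hne]; first by left.
  right; case/orP: wAA => wK.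
    by apply: (hcl A hA) => //; rewrite eq_sym.
    by apply: (hcl A' hA') => //; rewrite eq_sym.
- move=> [hv hall].
  have inK : forall K, K \in C -> x \in K -> v \in K.
    move=> K hK xK.
    have [_ hm] := hmax K hK.
    have cl : is_clique e (v |: K).
      move=> y z; rewrite !inE => /orP [/eqP ->|yK] /orP [/eqP ->|zK] hyz.
      + by rewrite eqxx in hyz.
      + case: (hall z (inN K z hK xK zK)) => [hz|//].
        by rewrite hz eqxx in hyz.
      + case: (hall y (inN K y hK xK yK)) => [hy|]; first by rewrite hy eqxx in hyz.
        by rewrite e_sym.
      + exact: (hcl K hK).
    have := hm _ cl (subsetUr _ _) => <-.
    by rewrite setU11.
  by rewrite inE (inK A hA xA) (inK A' hA' xA').
Qed.

Theorem mainTheorem17 (T : finType) (e : rel T)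
  (e_sym : symmetric e) (e_irr : irreflexive e)
  (CA CB : {set {set T}}) :
  is_minmax_clique_covering e CA -> is_minmax_clique_covering e CB ->
  simple_intersection CA -> simple_intersection CB ->
  CA != CB ->
  forall A A' B B' : {set T},
    A \in CA -> A' \in CA -> A != A' ->
    B \in CB -> B' \in CB -> B != B' ->
    A :&: A' :&: B :&: B' != set0 ->
    A :&: A' = B :&: B'.
Proof.
move=> [hcA [_ hmA]] [hcB [_ hmB]] hsA hsB _ A A' B B' hA hA' hAA' hB hB' hBB' hne.
have [x] := set0Pn _ hne; rewrite !inE => /andP [/andP [/andP [xA xA'] xB] xB'].
apply/setP => v.
apply/idP/idP => hv.
- by apply/(key e_sym hcB hmB hsB hB hB' hBB' xB xB');
     apply/(key e_sym hcA hmA hsA hA hA' hAA' xA xA').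
- by apply/(key e_sym hcA hmA hsA hA hA' hAA' xA xA');
     apply/(key e_sym hcB hmB hsB hB hB' hBB' xB xB').
Qed.
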